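(* Let $(X_n,F_n)_{n\ge1}$ be a process where each $X_n$ is an $\mathbb X$-valued random variable and each $F_n$ is a random probability measure on $\mathbb X$. Assume: (i) conditionally on the whole sequence $(F_n)_{n\ge1}$, the $X_n$ are independent and the conditional distribution of $X_n$ is $F_n$; (ii) $(F_n)_{n\ge1}$ is a measure-valued martingale with respect to its natural filtration, i.e. $\mathbb E[F_{n+1}(A)\mid F_1,\dots,F_n]=F_n(A)$ a.s. for every $n\ge1$ and $A\in\mathcal X$. Then $(X_n)_{n\ge1}$ is c.i.d. (with respect to its natural filtration).
   Context: All random elements are defined on a probability space $(\Omega,\mathcal F,\mathbb P)$; $\mathbb X$ is a Polish space with Borel $\sigma$-algebra $\mathcal X$. Spaces of probability measures carry the topology of weak convergence and the $\sigma$-algebra generated by the evaluation maps; a random probability measure is a random element of such a space. A sequence $(X_n)_{n\ge1}$ of $\mathbb X$-valued random variables adapted to a filtration $\mathcal G=(\mathcal G_n)_{n\ge0}$ is $\mathcal G$-c.i.d. (conditionally identically distributed) if $\mathbb E[f(X_{n+k})\mid\mathcal G_n]=\mathbb E[f(X_{n+1})\mid\mathcal G_n]$ a.s. for all $k\ge1$, $n\ge0$ and all bounded measurable $f:\mathbb X\to\mathbb R$; it is c.i.d. if this holds for its natural filtration $\mathcal G_n=\sigma(X_1,\dots,X_n)$, $\mathcal G_0=\{\emptyset,\Omega\}$. *)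

(* Defs.v *)
From HB Require Import structures.
From mathcomp Require Import all_boot all_order all_algebra.
From mathcomp Require Import all_classical all_reals all_analysis measurable_realfun.
Set Implicit Arguments.
Unset Strict Implicit.
Unset Printing Implicit Defensive.
Import Order.TTheory GRing.Theory Num.Theory.
Local Open Scope classical_set_scope.
Local Open Scope ring_scope.

Section Polish.
Context {R : realType} {d : measure_display} (X : measurableType d).

Definition is_metric (m : X -> X -> R) : Prop :=
  (forall x y, 0 <= m x y) /\ (forall x y, m x y = 0 <-> x = y) /\
  (forall x y, m x y = m y x) /\ (forall x y z, m x z <= m x y + m y z).

Definition metric_open (m : X -> X -> R) (U : set X) : Prop :=
  forall x, U x -> exists2 e : R, 0 < e & forall y, m x y < e -> U y.

Definition metric_complete (m : X -> X -> R) : Prop :=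
  forall u : nat -> X,
    (forall e : R, 0 < e -> exists N, forall p q, (N <= p)%N -> (N <= q)%N ->
        m (u p) (u q) < e) ->
    exists x, forall e : R, 0 < e -> exists N, forall p, (N <= p)%N -> m (u p) x < e.

Definition metric_separable (m : X -> X -> R) : Prop :=
  exists D : nat -> X, forall x (e : R), 0 < e -> exists i, m x (D i) < e.

Definition polish_borel : Prop :=
  exists m : X -> X -> R,
    [/\ is_metric m, metric_complete m, metric_separable m &
        (@measurable _ X) = <<s metric_open m >>].
End Polish.

Section CondExp.
Context {R : realType} {d : measure_display} {Omega : measurableType d}
        (P : probability Omega R).

Definition is_condexp (G : set (set Omega)) (Z W : Omega -> R) : Prop :=
  [/\ P.-integrable setT (EFin \o Z),
      P.-integrable setT (EFin \o W),
      (forall C : set R, measurable C -> G (W @^-1` C)) &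
      (forall B, G B -> (\int[P]_(x in B) (W x)%:E = \int[P]_(x in B) (Z x)%:E)%E)].

Definition condexp_is (G : set (set Omega)) (Z V : Omega -> R) : Prop :=
  exists W, is_condexp G Z W /\ {ae P, forall x, W x = V x}.

Definition condexp_eq (G : set (set Omega)) (Z1 Z2 : Omega -> R) : Prop :=
  exists W1 W2, [/\ is_condexp G Z1 W1, is_condexp G Z2 W2 &
                   {ae P, forall x, W1 x = W2 x}].
End CondExp.

Section Gen.
Context {R : realType} {d dX : measure_display} {Omega : measurableType d}
        {X : measurableType dX}.

(* sigma(Xs i : i < n)  (0-based indices) *)
Definition sigma_X (Xs : nat -> Omega -> X) (n : nat) : set (set Omega) :=
  <<s [set B | exists i (A : set X), [/\ (i < n)%N, measurable A &
                                          B = Xs i @^-1` A]] >>.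

Definition sigma_F (Fs : nat -> Omega -> probability X R) (I : set nat)
  : set (set Omega) :=
  <<s [set B | exists i (A : set X) (C : set (\bar R)),
        [/\ I i, measurable A, measurable C &
            B = (fun w => Fs i w A) @^-1` C]] >>.

(* c.i.d. (is_cid) with respect to the natural filtration (0-based: X_{m} of the paper
   is Xs (m-1), and G_n = sigma(Xs 0, ..., Xs (n-1))) *)
Definition is_cid (P : probability Omega R) (Xs : nat -> Omega -> X) : Prop :=
  forall (n k : nat) (f : X -> R), (0 < k)%N ->
    measurable_fun setT f -> (exists M : R, forall x, `|f x| <= M) ->
    condexp_eq P (sigma_X Xs n) (f \o Xs (n + k).-1) (f \o Xs n).
End Gen.

(* Main.v *)
Set Warnings "-all".
Require Import Defs.
From HB Require Import structures.
From mathcomp Require Import all_boot all_order all_algebra.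
From mathcomp Require Import all_classical all_reals all_analysis measurable_realfun.
Set Implicit Arguments.
Unset Strict Implicit.
Unset Printing Implicit Defensive.
Import Order.TTheory GRing.Theory Num.Theory.
Local Open Scope classical_set_scope.
Local Open Scope ring_scope.
Local Open Scope ereal_scope.

Section Dens.
Context {R : realType} {d : measure_display} {T : measurableType d}
        (P : {finite_measure set T -> \bar R}) (Z : T -> R)
        (Z0 : forall w, (0 <= Z w)%R) (iZ : P.-integrable setT (EFin \o Z)).

Definition nuZ A := \int[P]_(w in A) (Z w)%:E.

Let mZ : measurable_fun setT (EFin \o Z).
Proof. exact: measurable_int iZ. Qed.

Let nuZ0 : nuZ set0 = 0. Proof. by rewrite /nuZ integral_set0. Qed.
Let nuZ_ge0 A : 0 <= nuZ A.
Proof. by apply: integral_ge0 => w _; rewrite lee_fin. Qed.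
Let nuZ_sa : semi_sigma_additive nuZ.
Proof. apply: semi_sigma_additive_nng_induced => //= w; by rewrite lee_fin. Qed.
HB.instance Definition _ := isMeasure.Build _ _ _ nuZ nuZ0 nuZ_ge0 nuZ_sa.
Let nuZ_fin : fin_num_fun nuZ.
Proof.
move=> A mA; apply: integrable_fin_num => //; exact: integrableS iZ.
Qed.
HB.instance Definition _ := @Measure_isFinite.Build _ _ _ nuZ nuZ_fin.
Definition nuF : {finite_measure set T -> \bar R} := nuZ.

Lemma nuZ_dom : nuZ `<< P.
Proof.
apply/null_content_dominatesP => A mA PA; rewrite /nuZ.
apply: null_set_integral => //; exact: measurable_funTS.
Qed.

Lemma density_integral (Y : T -> \bar R) : (forall w, 0 <= Y w) ->
  measurable_fun setT Y ->
  \int[nuZ]_w Y w = \int[P]_w (Y w * (Z w)%:E).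
Proof.
move=> Y0 mY.
rewrite -(Radon_Nikodym_SigmaFinite.change_of_variables nuZ_dom) //.
have mf : measurable_fun setT (Radon_Nikodym_SigmaFinite.f nuZ P).
  exact: measurable_int (Radon_Nikodym_SigmaFinite.f_integrable nuZ_dom).
apply: ae_eq_integral => //.
- exact: emeasurable_funM.
- apply: emeasurable_funM => //.
- apply: ae_eqe_mul2l.
  apply: ae_eq_sym; apply: integral_ae_eq => //.
  move=> E _ mE; rewrite -Radon_Nikodym_SigmaFinite.f_integral //; exact: nuZ_dom.
Qed.
End Dens.

Section GT.
Context {R : realType} {d : measure_display} {T : measurableType d}
        (P : {finite_measure set T -> \bar R}) (gen : set (set T))
        (Hgen : gen `<=` measurable).
Local Notation TG := (g_sigma_algebraType gen).

Lemma sub_gen : forall C : set TG, measurable C -> measurable (C : set T).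
Proof. exact: smallest_sub (@sigma_algebra_measurable _ T) Hgen. Qed.

Lemma mid : measurable_fun setT (id : T -> TG).
Proof. by move=> _ C mC; rewrite setTI; apply: sub_gen. Qed.

Lemma mfunG (f : TG -> \bar R) : measurable_fun setT f ->
  measurable_fun setT (f : T -> \bar R).
Proof. move=> mf; exact: (measurableT_comp mf mid). Qed.

Lemma mfunGR (f : TG -> R) : measurable_fun setT f ->
  measurable_fun setT (f : T -> R).
Proof. move=> mf; exact: (measurableT_comp mf mid). Qed.

Lemma L_tower (Z V : T -> R) (Z0 : forall w, (0 <= Z w)%R) (V0 : forall w, (0 <= V w)%R)
  (iZ : P.-integrable setT (EFin \o Z)) (iV : P.-integrable setT (EFin \o V)) :
  (forall C, <<s gen >> C -> \int[P]_(w in C) (Z w)%:E = \int[P]_(w in C) (V w)%:E) ->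
  forall Y : TG -> \bar R, (forall w, 0 <= Y w) -> measurable_fun setT Y ->
  \int[P]_w (Y w * (Z w)%:E) = \int[P]_w (Y w * (V w)%:E).
Proof.
move=> ZV Y Y0 mY.
rewrite -(density_integral Z0 iZ Y0 (mfunG mY)).
rewrite -(density_integral V0 iV Y0 (mfunG mY)).
have e1 := @ge0_integral_pushforward _ _ T TG R id mid (nuZ P Z) setT Y measurableT mY (fun y _ => Y0 y).
have e2 := @ge0_integral_pushforward _ _ T TG R id mid (nuZ P V) setT Y measurableT mY (fun y _ => Y0 y).
rewrite preimage_setT in e1 e2.
rewrite /= in e1 e2.
rewrite -[LHS](e1 Z0 iZ) -[RHS](e2 V0 iV).
apply: eq_measure_integral; [exact: mid|exact: mid|move=> h1 h2 A mA _].
exact: (ZV A mA).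
Qed.

Section pf.
Variable mu : {finite_measure set T -> \bar R}.
Definition pf := pushforward mu (id : T -> TG).
Let pfm : {measure set TG -> \bar R}.
Proof. refine (pushforward mu (id : T -> TG) : measure TG R). exact: mid. Defined.
Let pf0 : pf set0 = 0. Proof. exact: (measure0 pfm). Qed.
Let pfge0 A : 0 <= pf A. Proof. exact: (measure_ge0 pfm A). Qed.
Let pfsa : semi_sigma_additive pf. Proof. exact: (@measure_semi_sigma_additive _ _ _ pfm). Qed.
HB.instance Definition _ := isMeasure.Build _ _ _ pf pf0 pfge0 pfsa.
Let pffin : fin_num_fun pf.
Proof. by move=> A mA; apply: (fin_num_measure mu); exact: sub_gen. Qed.
HB.instance Definition _ := @Measure_isFinite.Build _ _ _ pf pffin.
Definition pfF : {finite_measure set TG -> \bar R} := pf.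
End pf.
End GT.

Lemma bounded_integrable {R : realType} {d : measure_display} {T : measurableType d}
  (P : {finite_measure set T -> \bar R}) (f : T -> R) (M : R) :
  measurable_fun setT f -> (forall w, (`|f w| <= M)%R) -> P.-integrable setT (EFin \o f).
Proof.
move=> mf fM; apply/integrableP; split; first exact/measurable_EFinP.
have h : \int[P]_(w in setT) `|(EFin \o f) w| <= \int[P]_(w in setT) (cst M%:E) w.
  apply: ge0_le_integral => //.
  - by apply/measurable_EFinP; apply: measurableT_comp.
  - by move=> w _ /=; rewrite lee_fin.
apply: (le_lt_trans h).
rewrite integral_cst //= ltey_eq fin_numM //; exact: fin_num_measure.
Qed.

Lemma shiftM {R : realType} {d : measure_display} {T : measurableType d}
  (P : {finite_measure set T -> \bar R}) (f : T -> R) (c : R) (B : set T) :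
  measurable B -> P.-integrable setT (EFin \o f) ->
  \int[P]_(w in B) (f w - c)%:E = \int[P]_(w in B) (f w)%:E - (c%:E * P B).
Proof.
move=> mB iF.
under eq_integral do rewrite EFinB.
rewrite (@integralB_EFin _ _ _ P B f (cst c) mB).
- by rewrite -(integral_cst P mB c%:E).
- exact: integrableS iF.
- exact: finite_measure_integrable_cst.
Qed.

Section CE.
Context {R : realType} {d : measure_display} {T : measurableType d}
        (P : probability T R) (gen : set (set T))
        (Hgen : gen `<=` measurable).
Local Notation TG := (g_sigma_algebraType gen).

Lemma condexp_exists (Z : T -> R) (M : R) : measurable_fun setT Z ->
  (forall w, (`|Z w| <= M)%R) -> exists W, is_condexp P (<<s gen >>) Z W.
Proof.
move=> mZ ZM.
have M0 : (0 <= M)%R by apply: le_trans (ZM point).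
pose Z' w := (Z w + M)%R.
have Z'0 w : (0 <= Z' w)%R.
  by rewrite /Z' -lerBlDr sub0r; have := ZM w; rewrite ler_norml => /andP[].
have mZ' : measurable_fun setT Z' by apply: measurable_funD.
have iZ' : P.-integrable setT (EFin \o Z').
  apply: (@bounded_integrable _ _ _ P Z' (M + M)%R) => // w.
  by rewrite /Z' (le_trans (ler_normD _ _)) // lerD // ger0_norm.
have iZ : P.-integrable setT (EFin \o Z) by apply: (@bounded_integrable _ _ _ P Z M mZ ZM).
pose nu := nuF Z'0 iZ'.
pose PG := pfF Hgen P.
pose nuG := pfF Hgen nu.
have dom : nuG `<< PG.
  apply/null_content_dominatesP => A mA PA0.
  have := nuZ_dom iZ'.
  move/null_content_dominatesP; apply; [exact: sub_gen mA | exact: PA0].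
pose g := Radon_Nikodym_SigmaFinite.f nuG PG.
have g0 := Radon_Nikodym_SigmaFinite.f_ge0 dom.
have gfin := Radon_Nikodym_SigmaFinite.f_fin_num dom.
have gint := Radon_Nikodym_SigmaFinite.f_integrable dom.
have gE := Radon_Nikodym_SigmaFinite.f_integral dom.
have mg : measurable_fun setT g := measurable_int PG gint.
have pushE (D : set TG) (h : TG -> \bar R) : measurable D -> measurable_fun D h ->
    (forall x, 0 <= h x) -> \int[PG]_(x in D) h x = \int[P]_(x in D) h x.
  move=> mD mh h0.
  exact: (@ge0_integral_pushforward _ _ T TG R id (mid Hgen) P D h mD mh (fun y _ => h0 y)).
have ig : P.-integrable setT (g : T -> \bar R).
  apply/integrableP; split; first exact: mfunG.
  rewrite -pushE //; last by apply: measurableT_comp.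
  by case/integrableP: gint.
have ifg : P.-integrable setT (EFin \o (fun w => fine (g w))).
  by apply: (eq_integrable measurableT _ _ _ ig) => w _ /=; rewrite fineK.
pose W w := (fine (g w) - M)%R.
have mW : measurable_fun setT (W : TG -> R).
  apply: measurable_funB => //; exact: measurableT_comp.
exists W; split => //.
- apply: (eq_integrable measurableT _ _ _ (integrableB measurableT ifg (finite_measure_integrable_cst P M measurableT))).
  by move=> w _ /=; rewrite EFinB.
- by move=> C mC; have := mW measurableT C mC; rewrite setTI.
- move=> B GB.
  have mB : measurable (B : set T) by exact: (sub_gen Hgen GB).
  rewrite shiftM //.
  have -> : \int[P]_(w in B) (Z w)%:E = \int[P]_(w in B) (Z' w - M)%:E.
    by apply: eq_integral => w _; rewrite /Z' addrK.
  rewrite shiftM //; congr (_ - _).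
  transitivity (\int[P]_(w in B) g w).
    by apply: eq_integral => w _; rewrite fineK.
  rewrite -pushE //; last exact: measurable_funTS.
  by rewrite -gE.
Qed.
End CE.

Lemma prod_mfun {R : realType} {dT : measure_display} {T : measurableType dT}
  (s : seq nat) (h : nat -> T -> R) :
  (forall i, i \in s -> measurable_fun setT (h i)) ->
  measurable_fun setT (fun w => (\prod_(i <- s) h i w)%R).
Proof.
elim: s => [|a s IH] hm.
  rewrite (_ : (fun w => _) = cst 1%R); first exact: measurable_cst.
  by apply/funext => w; rewrite big_nil.
rewrite (_ : (fun w => _) = (fun w => h a w * \prod_(i <- s) h i w)%R); last first.
  by apply/funext => w; rewrite big_cons.
apply: measurable_funM; first by apply: hm; rewrite in_cons eqxx.
by apply: IH => i iS; apply: hm; rewrite in_cons iS orbT.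
Qed.

Lemma sigma_setT {T : Type} (G : set (set T)) : <<s G >> setT.
Proof.
have := @sigma_algebraCD _ setT G set0 (@sigma_algebra0 _ setT G).
by rewrite setD0.
Qed.

Local Close Scope ereal_scope.
Section Main.
Context {R : realType} {d dX : measure_display} {Omega : measurableType d}
  (P : probability Omega R) {X : measurableType dX}
  (Xs : nat -> Omega -> X) (Fs : nat -> Omega -> probability X R)
  (mXs : forall n, measurable_fun setT (Xs n))
  (mFs : forall n (A : set X), measurable A ->
           measurable_fun setT (fun w => Fs n w A))
  (Hcond : forall (s : seq nat) (A : nat -> set X), uniq s ->
     (forall i, measurable (A i)) ->
     condexp_is P (sigma_F Fs setT)
       (fun w => \prod_(i <- s) (\1_(A i) (Xs i w) : R))
       (fun w => \prod_(i <- s) fine (Fs i w (A i))))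
  (Hmart : forall (n : nat) (A : set X), measurable A ->
     condexp_is P (sigma_F Fs [set i | (i <= n)%N])
       (fun w => fine (Fs n.+1 w A)) (fun w => fine (Fs n w A))).

Lemma fineF_ge0 i w A : (0 <= fine (Fs i w A))%R.
Proof. by apply: fine_ge0; exact: measure_ge0. Qed.

Lemma fineF_le1 i w A : measurable A -> (fine (Fs i w A) <= 1)%R.
Proof.
move=> mA; have h0 := measure_ge0 (Fs i w) A; have h1 := probability_le1 (Fs i w) mA.
move: h0 h1; case: (Fs i w A) => [r| |] //=; by rewrite lee_fin.
Qed.

Lemma mfineF i A : measurable A -> measurable_fun setT (fun w => fine (Fs i w A)).
Proof. move=> mA; exact: (measurableT_comp (fine_measurable measurableT) (mFs i mA)). Qed.

Lemma HC (s : seq nat) (A : nat -> set X) : uniq s -> (forall i, measurable (A i)) ->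
  (\int[P]_w (\prod_(i <- s) (\1_(A i) (Xs i w) : R))%:E =
  \int[P]_w (\prod_(i <- s) fine (Fs i w (A i)))%:E)%E.
Proof.
move=> us mA; have [W [[iZ iW _ hW] aeW]] := Hcond us mA.
rewrite -(hW setT); last exact: sigma_setT.
apply: ae_eq_integral => //.
- exact: measurable_int iW.
- apply/measurable_EFinP; apply: prod_mfun => i _; exact: mfineF.
- by apply: filterS aeW => x /= -> _.
Qed.

Lemma prod_indicE (s : seq nat) (A : nat -> set X) w :
  (\prod_(i <- s) (\1_(A i) (Xs i w) : R)) =
  \1_[set w | forall i, i \in s -> A i (Xs i w)] w.
Proof.
elim: s => [|a s IH].
  by rewrite big_nil indicE mem_set.
rewrite big_cons IH !indicE.
have [Ha|Ha] := pselect (A a (Xs a w)).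
- rewrite (mem_set Ha) mul1r.
  have [h|h] := pselect (forall i, i \in s -> A i (Xs i w)).
  + rewrite (mem_set h) mem_set //= => i; rewrite in_cons => /orP[/eqP->//|]; exact: h.
  + rewrite (memNset h) memNset //= => h'; apply: h => i iS.
    by apply: h'; rewrite in_cons iS orbT.
- rewrite (memNset Ha) mul0r memNset //= => h; apply: Ha; apply: h.
  by rewrite in_cons eqxx.
Qed.

Definition Ynf n (As : nat -> set X) w := (\prod_(i <- iota 0 n) fine (Fs i w (As i)))%R.
Definition SB n (As : nat -> set X) := [set w | forall i, (i < n)%N -> As i (Xs i w)].

Lemma mSB n As : (forall i, measurable (As i)) -> measurable (SB n As).
Proof.
move=> mAs; elim: n => [|n IH].
  by rewrite (_ : SB 0 As = setT) //; apply/seteqP; split => w //= _ i.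
rewrite (_ : SB n.+1 As = SB n As `&` Xs n @^-1` As n).
  apply: measurableI => //; rewrite -[X in measurable X]setTI; exact: mXs.
apply/seteqP; split => w /=.
- move=> h; split; last exact: h.
  by move=> i hi; apply: h; rewrite ltnS ltnW.
- move=> [h1 h2] i; rewrite ltnS leq_eqVlt => /orP[/eqP->//|]; exact: h1.
Qed.

Lemma base n j As A : (forall i, measurable (As i)) -> measurable A -> (n <= j)%N ->
  P (SB n As `&` Xs j @^-1` A) = (\int[P]_w (Ynf n As w * fine (Fs j w A))%:E)%E.
Proof.
move=> mAs mA nj.
pose A' i := if i == j then A else As i.
have mA' i : measurable (A' i) by rewrite /A'; case: ifP.
have mS : measurable (SB n As `&` Xs j @^-1` A).
  apply: measurableI; first exact: mSB.
  rewrite -[X in measurable X]setTI; exact: mXs.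
rewrite -(setIT (SB n As `&` _)) -integral_indic //.
transitivity (\int[P]_w (\prod_(i <- rcons (iota 0 n) j) (\1_(A' i) (Xs i w) : R))%:E)%E.
  apply: eq_integral => w _; rewrite prod_indicE; congr (_%:E).
  rewrite (_ : SB n As `&` _ = [set w | forall i, i \in rcons (iota 0 n) j -> A' i (Xs i w)]) //.
  apply/seteqP; split => w' /=.
  - move=> [hS hA] i; rewrite mem_rcons in_cons mem_iota => /orP[/eqP->|/andP[_ hi]].
      by rewrite /A' eqxx.
    rewrite /A' ltn_eqF; last exact: leq_trans hi nj.
    exact: hS.
  - move=> h; split.
      move=> i hi; have := h i; rewrite /A' ltn_eqF; last exact: leq_trans hi nj.
      by apply; rewrite mem_rcons in_cons mem_iota hi orbT.
    by have := h j; rewrite /A' eqxx; apply; rewrite mem_rcons in_cons eqxx.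
rewrite HC //; last by rewrite rcons_uniq iota_uniq andbT mem_iota add0n ltnNge nj andbF.
apply: eq_integral => w _; congr (_%:E).
rewrite -cats1 big_cat big_seq1 /= {2}/A' eqxx; congr (_ * _)%R.
apply: eq_big_seq => i; rewrite mem_iota => /andP[_ hi].
by rewrite /A' ltn_eqF //; exact: leq_trans hi nj.
Qed.

Lemma mg_step n j As A : (forall i, measurable (As i)) -> measurable A -> (n <= j)%N ->
  (\int[P]_w (Ynf n As w * fine (Fs j.+1 w A))%:E =
   \int[P]_w (Ynf n As w * fine (Fs j w A))%:E)%E.
Proof.
move=> mAs mA nj.
pose gen := [set B | exists i (A0 : set X) (C : set (\bar R)),
  [/\ [set i | (i <= j)%N] i, measurable A0, measurable C &
      B = (fun w => Fs i w A0) @^-1` C]].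
have Hgen : gen `<=` measurable.
  move=> B [i [A0 [C [_ mA0 mC ->]]]].
  by have := mFs i mA0 measurableT mC; rewrite setTI.
have [W [[iZ iW _ hW] aeW]] := Hmart j mA.
have ZV : forall C, <<s gen >> C ->
    (\int[P]_(w in C) (fine (Fs j.+1 w A))%:E = \int[P]_(w in C) (fine (Fs j w A))%:E)%E.
  move=> C GC; have mC : measurable C by exact: (sub_gen Hgen GC).
  rewrite -hW //; apply: ae_eq_integral => //.
  - apply: measurable_funTS; exact: measurable_int iW.
  - apply/measurable_EFinP; apply: measurable_funTS; exact: mfineF.
  - by apply: filterS aeW => x /= -> _.
have mY : measurable_fun (setT : set (g_sigma_algebraType gen))
    (fun w : g_sigma_algebraType gen => (Ynf n As w)%:E).
  apply/measurable_EFinP; apply: prod_mfun => i; rewrite mem_iota => /andP[_ hi].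
  apply: (measurableT_comp (fine_measurable measurableT)).
  move=> _ C mC; rewrite setTI; apply: sub_sigma_algebra.
  exists i, (As i), C; split => //=; exact: leq_trans (ltnW hi) nj.
have Y0 : forall w, (0 <= (Ynf n As w)%:E)%E.
  move=> w; rewrite lee_fin /Ynf; apply: prodr_ge0 => i _; exact: fineF_ge0.
have bnd i w : (`|fine (Fs i w A)| <= 1)%R by rewrite ger0_norm ?fineF_ge0 ?fineF_le1.
have iZ' : P.-integrable setT (EFin \o (fun w => fine (Fs j.+1 w A))).
  exact: (@bounded_integrable _ _ _ P _ 1%R (mfineF _ mA) (bnd _)).
have iV' : P.-integrable setT (EFin \o (fun w => fine (Fs j w A))).
  exact: (@bounded_integrable _ _ _ P _ 1%R (mfineF _ mA) (bnd _)).
have := @L_tower _ _ _ P gen Hgen _ _ (fun w => fineF_ge0 j.+1 w A) (fun w => fineF_ge0 j w A)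
  iZ' iV' ZV _ Y0 mY => h.
under eq_integral do rewrite EFinM.
under [in RHS]eq_integral do rewrite EFinM.
exact: h.
Qed.

Lemma mg_chain n k As A : (forall i, measurable (As i)) -> measurable A ->
  (\int[P]_w (Ynf n As w * fine (Fs (n + k) w A))%:E =
   \int[P]_w (Ynf n As w * fine (Fs n w A))%:E)%E.
Proof.
move=> mAs mA; elim: k => [|k IH]; first by rewrite addn0.
by rewrite addnS mg_step // leq_addr.
Qed.

Lemma meas_gen n m As A : (forall i, measurable (As i)) -> measurable A -> (n <= m)%N ->
  P (SB n As `&` Xs m @^-1` A) = P (SB n As `&` Xs n @^-1` A).
Proof.
move=> mAs mA nm.
rewrite !base // -(subnKC nm); exact: mg_chain.
Qed.

Lemma meas_sigma n m A : measurable A -> (n <= m)%N ->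
  forall B, sigma_X Xs n B -> P (B `&` Xs m @^-1` A) = P (B `&` Xs n @^-1` A).
Proof.
move=> mA nm.
pose G := [set B | exists As : nat -> set X, (forall i, measurable (As i)) /\ B = SB n As].
have Gm : G `<=` measurable by move=> _ [As [mAs ->]]; exact: mSB.
have mXA j : measurable (Xs j @^-1` A).
  rewrite -[X in measurable X]setTI; exact: mXs.
have sub : sigma_X Xs n `<=` <<s G >>.
  apply: smallest_sub; first exact: smallest_sigma_algebra.
  move=> _ [i [A0 [hi mA0 ->]]]; apply: sub_sigma_algebra.
  exists (fun l => if l == i then A0 else setT); split; first by move=> l; case: ifP.
  apply/seteqP; split => w /=.
  - by move=> h l hl; case: ifPn => [/eqP->//|].
  - by move=> h; have := h i hi; rewrite eqxx.
move=> B /sub GB.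
have GT : G setT.
  exists (fun _ => setT); split => //; apply/seteqP; split => w //= _ i.
have := @g_sigma_algebra_measure_unique _ R Omega G Gm (fun _ => setT) (fun _ => GT)
  (bigcup_const _ _) (mrestr P (mXA m)) (mrestr P (mXA n)).
apply => //.
- move=> _ _ [As1 [mAs1 ->]] [As2 [mAs2 ->]].
  exists (fun i => As1 i `&` As2 i); split; first by move=> i; exact: measurableI.
  apply/seteqP; split => w /=.
  + by move=> [h1 h2] i hi; split; [exact: h1|exact: h2].
  + by move=> h; split => i hi; have [] := h i hi.
- move=> _ [As [mAs ->]]; rewrite /mrestr; exact: meas_gen.
- move=> k; rewrite /mrestr; apply: (le_lt_trans (probability_le1 P _)) => //.
  by apply: measurableI.
exact: ltry.
Qed.

Lemma intB_push j (f : X -> R) (M : R) (B : set Omega) (mB : measurable B) :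
  measurable_fun setT f -> (forall x, `|f x| <= M) ->
  (\int[P]_(w in B) (f (Xs j w))%:E =
   \int[pushforward (nuZ P (\1_B : Omega -> R)) (Xs j)]_x (f x + M)%:E - M%:E * P B)%E.
Proof.
move=> mf fM.
have M0 : 0 <= M by apply: le_trans (fM point).
have g0 w : 0 <= f (Xs j w) + M.
  by rewrite -lerBlDr sub0r; have := fM (Xs j w); rewrite ler_norml => /andP[].
have mg : measurable_fun setT (fun w => f (Xs j w) + M).
  apply: measurable_funD => //; exact: measurableT_comp mf (mXs j).
have ig : P.-integrable setT (EFin \o (fun w => f (Xs j w) + M)).
  apply: (@bounded_integrable _ _ _ P _ (M + M) mg) => w.
  by rewrite (le_trans (ler_normD _ _)) // lerD // ger0_norm.
transitivity (\int[P]_(w in B) (f (Xs j w) + M - M)%:E)%E.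
  by apply: eq_integral => w _; rewrite addrK.
rewrite shiftM //; congr (_ - _)%E.
have Z0 : forall w, 0 <= (\1_B w : R) by move=> w; rewrite indicE.
have iZ : P.-integrable setT (EFin \o (\1_B : Omega -> R)) by exact: integrable_indic.
rewrite -{1}(setTI B) integral_mkcondr epatch_indic.
transitivity (\int[nuZ P (\1_B : Omega -> R)]_w (f (Xs j w) + M)%:E)%E.
  rewrite (density_integral Z0 iZ) //.
  exact/measurable_EFinP.
have h0 : forall x, (0 <= (f x + M)%:E)%E.
  move=> x; rewrite lee_fin -lerBlDr sub0r; have := fM x; rewrite ler_norml => /andP[].
  by [].
have mh : measurable_fun setT (fun x => (f x + M)%:E).
  apply/measurable_EFinP; exact: measurable_funD.
symmetry.
exact: (@ge0_integral_pushforward _ _ Omega X R (Xs j) (mXs j) (nuF Z0 iZ) setT _ measurableT mh (fun x _ => h0 x)).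
Qed.

Lemma key n m (f : X -> R) (M : R) B : measurable_fun setT f -> (forall x, `|f x| <= M) ->
  (n <= m)%N -> sigma_X Xs n B ->
  (\int[P]_(w in B) (f (Xs m w))%:E = \int[P]_(w in B) (f (Xs n w))%:E)%E.
Proof.
move=> mf fM nm GB.
have mB : measurable B.
  apply: (smallest_sub (@sigma_algebra_measurable _ Omega) _ GB).
  move=> _ [i [A0 [_ mA0 ->]]]; rewrite -[X in measurable X]setTI; exact: mXs.
rewrite !(@intB_push _ f M B mB) //; congr (_ - _)%E.
have Z0 : forall w, 0 <= (\1_B w : R) by move=> w; rewrite indicE.
have iZ : P.-integrable setT (EFin \o (\1_B : Omega -> R)) by exact: integrable_indic.
apply: (eq_measure_integral (pushforward (nuF Z0 iZ) (Xs n))) => A mA _.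
change (nuZ P (\1_B : Omega -> R) (Xs m @^-1` A) = nuZ P (\1_B : Omega -> R) (Xs n @^-1` A)).
have mXA j : measurable (Xs j @^-1` A).
  rewrite -[X in measurable X]setTI; exact: mXs.
rewrite /nuZ !integral_indic //.
exact: meas_sigma.
Qed.
End Main.

Unset Implicit Arguments.
Theorem mainTheorem1 (R : realType) (d dX : measure_display)
  (Omega : measurableType d) (P : probability Omega R)
  (X : measurableType dX) (HX : polish_borel (R := R) X)
  (Xs : nat -> Omega -> X) (Fs : nat -> Omega -> probability X R)
  (mXs : forall n, measurable_fun setT (Xs n))
  (mFs : forall n (A : set X), measurable A ->
           measurable_fun setT (fun w => Fs n w A))
  (* (i) conditionally on (F_n), the X_n are independent with laws F_n *)
  (Hcond : forall (s : seq nat) (A : nat -> set X), uniq s ->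
     (forall i, measurable (A i)) ->
     condexp_is P (sigma_F Fs setT)
       (fun w => \prod_(i <- s) (\1_(A i) (Xs i w) : R))
       (fun w => \prod_(i <- s) fine (Fs i w (A i))))
  (* (ii) (F_n) is a measure-valued martingale w.r.t. its natural filtration *)
  (Hmart : forall (n : nat) (A : set X), measurable A ->
     condexp_is P (sigma_F Fs [set i | (i <= n)%N])
       (fun w => fine (Fs n.+1 w A)) (fun w => fine (Fs n w A))) :
  is_cid P Xs.
Proof.
move=> n k f k0 mf [M fM].
have nm : (n <= (n + k).-1)%N.
  by rewrite -subn1 -addnBA // leq_addr.
pose gen := [set B | exists i (A : set X), [/\ (i < n)%N, measurable A & B = Xs i @^-1` A]].
have Hgen : gen `<=` measurable.
  move=> _ [i [A [_ mA ->]]]; rewrite -[X in measurable X]setTI; exact: mXs.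
have mfn : measurable_fun setT (f \o Xs n) := measurableT_comp mf (mXs n).
have [W [iZ iW mW hW]] := condexp_exists P Hgen mfn (fun w => fM (Xs n w)).
have K := key mXs mFs Hcond Hmart.
exists W, W; split => //.
- split => //.
  + apply: (@bounded_integrable _ _ _ P _ M) => // [|w]; last exact: fM.
    exact: measurableT_comp mf (mXs _).
  + move=> B GB; rewrite hW //; apply/esym.
    exact: (K n _ f M B mf fM nm GB).
- exact: aeW.
Qed.
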